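(* Let $\mathfrak L$ be a GNN layer of input dimension $p$. Then there is a $\gamma\in\mathbb N_{>0}$ such that for all graphs $G$, all signals $\mathcal x:V(G)\to\mathbb R^p$, and all vertices $v\in V(G)$, $$\|\tilde{\mathfrak L}(G,\mathcal x)(v)\|_\infty\le\gamma\cdot\big(\|\mathcal x|_{N[v]}\|_\infty+1\big)\max\{\deg(v),1\}\le\gamma\cdot(\|\mathcal x\|_\infty+1)|G|.$$
   Context: Graphs are finite, simple, undirected with nonempty vertex set; $N(v)$ is the neighbourhood, $N[v]=N(v)\cup\{v\}$, $\deg(v)=|N(v)|$, $|G|=|V(G)|$. For a signal $\mathcal x$ and $W\subseteq V(G)$, $\|\mathcal x|_W\|_\infty=\max_{w\in W}\|\mathcal x(w)\|_\infty$ and $\|\mathcal x\|_\infty=\|\mathcal x|_{V(G)}\|_\infty$. An FNN has a finite dag skeleton, Lipschitz continuous activation functions $\mathfrak a_v$, real weights $w_e$ and biases $b_v$; sources are inputs, sinks outputs, a non-input node computes $\mathfrak a_v(b_v+\sum_{uv\in E}w_{uv}\cdot\text{value}(u))$. A GNN layer $\mathfrak L=(\mathrm{msg},\mathrm{agg},\mathrm{comb})$ of input dimension $p$ has $\mathrm{msg}:\mathbb R^{2p}\to\mathbb R^r$ and $\mathrm{comb}:\mathbb R^{p+r}\to\mathbb R^q$ computed by FNNs and $\mathrm{agg}$ coordinatewise sum, mean or maximum of finite multisets (value $\mathbf 0$ on the empty multiset); $\tilde{\mathfrak L}(G,\mathcal x)(v)=\mathrm{comb}\big(\mathcal x(v),\mathrm{agg}\{\!\{\mathrm{msg}(\mathcal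 x(v),\mathcal x(w)):w\in N(v)\}\!\}\big)$. *)

(* Defs.v *)
From HB Require Import structures.
From mathcomp Require Import all_boot all_order all_algebra.
From mathcomp Require Import reals.
Set Implicit Arguments. Unset Strict Implicit. Unset Printing Implicit Defensive.
Import Order.TTheory GRing.Theory Num.Theory.
Local Open Scope ring_scope.

Section Defs.
Variable R : realType.

Definition normInf (n : nat) (v : 'rV[R]_n) : R :=
  \big[Num.max/0]_(i < n) `|v ord0 i|.

(* The finite dag skeleton is given with its nodes numbered 0..p+N-1 in a
   topological order (every edge goes from a smaller to a larger index);
   the p sources (= input nodes) are the nodes 0..p-1, in the order of the
   input coordinates; the sinks are the output nodes, listed (injectively
   and exhaustively) by fnn_out in the order of the output coordinates. *)
Record fnn (p q : nat) := FNN {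
  fnn_N : nat;
  fnn_edge : rel 'I_(p + fnn_N);
  fnn_w : 'I_(p + fnn_N) -> 'I_(p + fnn_N) -> R;
  fnn_b : 'I_(p + fnn_N) -> R;
  fnn_act : 'I_(p + fnn_N) -> R -> R;
  fnn_out : 'I_q -> 'I_(p + fnn_N);
  fnn_topo : forall u v, fnn_edge u v -> (u < v)%N;
  fnn_sources : forall v : 'I_(p + fnn_N), (p <= v)%N = [exists u, fnn_edge u v];
  fnn_sinks : forall v : 'I_(p + fnn_N), (v \in codom fnn_out) = ~~ [exists u, fnn_edge v u];
  fnn_out_inj : injective fnn_out;
  fnn_lipschitz : forall v : 'I_(p + fnn_N), (p <= v)%N ->
     exists K : R, forall a b, `|fnn_act v a - fnn_act v b| <= K * `|a - b|
}.

Arguments fnn_N {p q} f.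
Arguments fnn_edge {p q} f.
Arguments fnn_w {p q} f.
Arguments fnn_b {p q} f.
Arguments fnn_act {p q} f.
Arguments fnn_out {p q} f.

Section FnnEval.
Variables (p q : nat) (F : fnn p q) (x : 'rV[R]_p).
Local Notation M := (p + fnn_N F)%N.

(* value of node k, given the list s of values of nodes 0..k-1 *)
Definition fnn_node_val (k : nat) (s : seq R) : R :=
  match (insub k : option 'I_M) with
  | Some v =>
      match (insub k : option 'I_p) with
      | Some i => x ord0 i
      | None => fnn_act F v (fnn_b F v +
                  \sum_(u : 'I_M | fnn_edge F u v) fnn_w F u v * nth 0 s u)
      end
  | None => 0
  end.

Fixpoint fnn_vals (k : nat) : seq R :=
  match k with
  | 0 => [::]
  | k'.+1 => let s := fnn_vals k' in rcons s (fnn_node_val k' s)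
  end.

Definition fnn_eval : 'rV[R]_q :=
  \row_(j < q) nth 0 (fnn_vals M) (fnn_out F j).
End FnnEval.

Inductive agg_kind := AggSum | AggMean | AggMax.

Definition aggregate (r : nat) (k : agg_kind) (s : seq 'rV[R]_r) : 'rV[R]_r :=
  match s with
  | [::] => 0
  | m :: s' =>
    match k with
    | AggSum => \sum_(a <- s) a
    | AggMean => (size s)%:R^-1 *: \sum_(a <- s) a
    | AggMax => \row_(j < r) foldr (fun (a : 'rV[R]_r) (b : R) => Num.max (a ord0 j) b) (m ord0 j) s'
    end
  end.

Record gnn_layer (p : nat) := GNNLayer {
  gl_r : nat;
  gl_q : nat;
  gl_msg : fnn (p + p) gl_r;
  gl_agg : agg_kind;
  gl_comb : fnn (p + gl_r) gl_q
}.

(* A graph is (V, adj) with V a finite type and adj a symmetric irreflexive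
   relation; signals are maps V -> R^p. *)
Definition gnn_apply (p : nat) (L : gnn_layer p) (V : finType) (adj : rel V)
    (x : V -> 'rV[R]_p) (v : V) : 'rV[R]_(gl_q L) :=
  fnn_eval (gl_comb L)
    (row_mx (x v)
       (aggregate (gl_agg L)
          [seq fnn_eval (gl_msg L) (row_mx (x v) (x w)) | w <- enum (adj v)])).

Definition deg (V : finType) (adj : rel V) (v : V) : nat := #|[pred w | adj v w]|.

Definition closed_nbhd_norm (p : nat) (V : finType) (adj : rel V)
    (x : V -> 'rV[R]_p) (v : V) : R :=
  \big[Num.max/0]_(w : V | (w == v) || adj v w) normInf (x w).

Definition signal_norm (p : nat) (V : finType) (x : V -> 'rV[R]_p) : R :=
  \big[Num.max/0]_(w : V) normInf (x w).

End Defs.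

(* Main.v *)
Require Import Defs.
From HB Require Import structures.
From mathcomp Require Import all_boot all_order all_algebra.
From mathcomp Require Import reals.
From mathcomp Require Import ring lra.
Import Order.TTheory GRing.Theory Num.Theory.
Set Implicit Arguments. Unset Strict Implicit.
Local Open Scope ring_scope.

Section Helpers.
Variable R : realType.

Lemma bigmax_leB (I : Type) (r : seq I) (P : pred I) (F : I -> R) (B : R) :
  0 <= B -> (forall i, P i -> F i <= B) -> \big[Num.max/0]_(i <- r | P i) F i <= B.
Proof.
move=> B0 H; apply: (big_ind (fun y => y <= B)) => // a b ha hb.
by rewrite ge_max ha hb.
Qed.

Lemma bigmax_ge0 (I : Type) (r : seq I) (P : pred I) (F : I -> R) :
  (forall i, P i -> 0 <= F i) -> 0 <= \big[Num.max/0]_(i <- r | P i) F i.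
Proof.
move=> H; apply: (big_ind (fun y => 0 <= y)) => // a b ha hb.
by rewrite le_max ha.
Qed.

Lemma le_bigmaxB (I : eqType) (r : seq I) (P : pred I) (F : I -> R) i :
  i \in r -> P i -> F i <= \big[Num.max/0]_(j <- r | P j) F j.
Proof.
elim: r => // a r IH; rewrite inE big_cons => /orP [/eqP <- Pi|ir Pi].
  by rewrite Pi le_max lexx.
case: ifP => _; last exact: IH.
by rewrite le_max (IH ir Pi) orbT.
Qed.

Lemma normInf_ge0 n (v : 'rV[R]_n) : 0 <= normInf v.
Proof. by apply: bigmax_ge0 => i _. Qed.

Lemma normInf_le n (v : 'rV[R]_n) (B : R) :
  0 <= B -> (forall i, `|v ord0 i| <= B) -> normInf v <= B.
Proof. by move=> B0 H; apply: bigmax_leB => // i _. Qed.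

Lemma le_normInf n (v : 'rV[R]_n) i : `|v ord0 i| <= normInf v.
Proof. by apply: (@le_bigmaxB _ _ xpredT (fun i => `|v ord0 i|)) => //; rewrite mem_index_enum. Qed.

Lemma normInf_row_mx m n (a : 'rV[R]_m) (b : 'rV[R]_n) B :
  normInf a <= B -> normInf b <= B -> normInf (row_mx a b) <= B.
Proof.
move=> ha hb; apply: normInf_le; first exact: le_trans (normInf_ge0 a) ha.
move=> i; rewrite -[i]splitK; case: (split i) => j /=.
  by rewrite row_mxEl; apply: le_trans (le_normInf _ _) ha.
by rewrite row_mxEr; apply: le_trans (le_normInf _ _) hb.
Qed.

Lemma normInf_sum n (s : seq 'rV[R]_n) K :
  0 <= K -> (forall a, a \in s -> normInf a <= K) ->
  forall i, `|(\sum_(a <- s) a) ord0 i| <= (size s)%:R * K.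
Proof.
move=> K0; elim: s => [|a s IH] H i.
  by rewrite big_nil mxE normr0 mul0r.
rewrite big_cons mxE /= mulrSr mulrDl mul1r addrC.
apply: le_trans (ler_normD _ _) _; apply: lerD.
  by apply: IH => b hb; apply: H; rewrite inE hb orbT.
by apply: le_trans (le_normInf _ _) _; apply: H; rewrite inE eqxx.
Qed.

Lemma aggregate_bound r (k : agg_kind) (s : seq 'rV[R]_r) K :
  0 <= K -> (forall a, a \in s -> normInf a <= K) ->
  normInf (aggregate k s) <= (maxn (size s) 1)%:R * K.
Proof.
move=> K0 H.
have hD : 1 <= (maxn (size s) 1)%:R :> R by rewrite ler1n leq_maxr.
have hDK : K <= (maxn (size s) 1)%:R * K by rewrite ler_peMl.
case: s H hD hDK => [|m s'] H hD hDK /=.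
  by apply: normInf_le => [|i]; [lra| rewrite mxE normr0; lra].
case: k.
- apply: normInf_le => [|i]; first by lra.
  apply: le_trans (normInf_sum K0 H i) _; apply: ler_wpM2r => //.
- apply: normInf_le => [|i]; first by lra.
  rewrite !mxE normrM; apply: le_trans hDK.
  have := normInf_sum K0 H i.
  set S := `|_|; set n := (size _)%:R => hS.
  have n0 : 0 < n by rewrite /n ltr0n.
  rewrite ger0_norm; last by rewrite invr_ge0 ltW.
  by rewrite mulrC ler_pdivrMr // mulrC.
- apply: normInf_le => [|j]; first by lra.
  apply: le_trans hDK; rewrite mxE.
  have hm : `|m ord0 j| <= K.
    by apply: le_trans (le_normInf _ _) _; apply: H; rewrite inE eqxx.
  have : forall a, a \in s' -> `|a ord0 j| <= K.
    by move=> a ha; apply: le_trans (le_normInf _ _) _; apply: H; rewrite inE ha orbT.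
  elim: s' {H hD} => //= a s IH Hs.
  have [ha|ha] := leP (a ord0 j) (foldr (fun (a0 : 'rV_r) (b : R) => Num.max (a0 ord0 j) b) (m ord0 j) s).
  + apply: IH => b hb; apply: Hs; by rewrite inE hb orbT.
  + by apply: Hs; rewrite inE eqxx.
Qed.

Lemma size_fnn_vals p q (F : fnn R p q) x k : size (fnn_vals F x k) = k.
Proof. by elim: k => //= k IH; rewrite size_rcons IH. Qed.

Lemma fnn_vals_bound p q (F : fnn R p q) k :
  exists B : R, 0 <= B /\ forall x i, `|nth 0 (fnn_vals F x k) i| <= B * (normInf x + 1).
Proof.
elim: k => [|k [B [B0 HB]]].
  by exists 0; split => // x i; rewrite nth_nil normr0 mul0r.
suff [C [C0 HC]] : exists C : R, 0 <= C /\ forall x, `|fnn_node_val F x k (fnn_vals F x k)| <= C * (normInf x + 1).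
  exists (Num.max B C); split; first by rewrite le_max B0.
  move=> x i /=; rewrite nth_rcons size_fnn_vals.
  have nx := normInf_ge0 x.
  case: ifP => _.
    apply: le_trans (HB x i) _; apply: ler_wpM2r; first lra.
    by rewrite le_max lexx.
  case: ifP => _.
    apply: le_trans (HC x) _; apply: ler_wpM2r; first lra.
    by rewrite le_max lexx orbT.
  rewrite normr0 mulr_ge0 //; [by rewrite le_max B0 | lra].
rewrite /fnn_node_val.
case: insubP => [v _ vk|_]; last first.
  by exists 0; split => // x; rewrite normr0 mul0r.
case: insubP => [i _ ik|hp].
  exists 1; split => // x; rewrite mul1r.
  have := normInf_ge0 x; have := le_normInf x i; lra.
have pv : (p <= v)%N by rewrite vk leqNgt.
have [K HK] := fnn_lipschitz pv.
set K' := Num.max K 0.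
have K'0 : 0 <= K' by rewrite le_max lexx orbT.
set W := \sum_(u | fnn_edge (f:=F) u v) `|fnn_w (f:=F) u v|.
have W0 : 0 <= W by apply: sumr_ge0 => u _.
set a0 := `|fnn_act (f:=F) v 0|; set b := `|fnn_b (f:=F) v|.
exists (a0 + K' * b + K' * W * B); split.
  have : 0 <= K' * W * B by rewrite !mulr_ge0.
  have : 0 <= K' * b by rewrite mulr_ge0 // /b normr_ge0.
  have : 0 <= a0 by rewrite /a0 normr_ge0.
  lra.
move=> x; set t := normInf x + 1.
have t1 : 1 <= t by have := normInf_ge0 x; rewrite /t; lra.
set y := (fnn_b (f:=F) v + _).
have hy : `|y| <= b + W * B * t.
  apply: le_trans (ler_normD _ _) _; apply: lerD => //.
  apply: le_trans (ler_norm_sum _ _ _) _.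
  rewrite /W big_distrl /= big_distrl /=.
  apply: ler_sum => u _; rewrite normrM -mulrA; apply: ler_wpM2l => //.
have hact : `|fnn_act (f:=F) v y| <= a0 + K' * `|y|.
  have := HK y 0; rewrite subr0 => h.
  have : `|fnn_act (f:=F) v y| <= `|fnn_act (f:=F) v 0| + `|fnn_act (f:=F) v y - fnn_act (f:=F) v 0|.
    by rewrite -{1}(subrK (fnn_act (f:=F) v 0) (fnn_act (f:=F) v y)) addrC; apply: ler_normD.
  have : K * `|y| <= K' * `|y| by apply: ler_wpM2r => //; rewrite le_max lexx.
  rewrite /a0; lra.
apply: le_trans hact _.
have a00 : 0 <= a0 by rewrite normr_ge0.
have b0 : 0 <= b by rewrite normr_ge0.
have hKy : K' * `|y| <= K' * (b + W * B * t) by apply: ler_wpM2l.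
have h1 : (a0 + K' * b) * 1 <= (a0 + K' * b) * t.
  by apply: ler_wpM2l => //; apply: addr_ge0 => //; apply: mulr_ge0.
apply: le_trans (lerD (lexx a0) hKy) _.
rewrite mulr1 in h1; rewrite !mulrDl !mulrDr in h1 *.
lra.
Qed.

Lemma fnn_bound p q (F : fnn R p q) :
  exists B : R, 0 <= B /\ forall x, normInf (fnn_eval F x) <= B * (normInf x + 1).
Proof.
have [B [B0 HB]] := fnn_vals_bound F (p + fnn_N F).
exists B; split => // x; apply: normInf_le => [|j].
  by apply: mulr_ge0 => //; have := normInf_ge0 x; lra.
by rewrite mxE; apply: HB.
Qed.
End Helpers.

Unset Implicit Arguments. Set Strict Implicit.

Theorem lemma4p2 (R : realType) (p : nat) (L : gnn_layer R p) :
  exists gamma : nat, (0 < gamma)%N /\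
    forall (V : finType) (adj : rel V), symmetric adj -> irreflexive adj ->
    forall (x : V -> 'rV[R]_p) (v : V),
      normInf (gnn_apply L adj x v)
        <= gamma%:R * (closed_nbhd_norm adj x v + 1) * (maxn (deg adj v) 1)%:R
      /\ gamma%:R * (closed_nbhd_norm adj x v + 1) * (maxn (deg adj v) 1)%:R
        <= gamma%:R * (signal_norm x + 1) * #|V|%:R.
Proof.
have [Bm [Bm0 HBm]] := fnn_bound (gl_msg L).
have [Bc [Bc0 HBc]] := fnn_bound (gl_comb L).
set G := Bc * (2 + Bm).
have G0 : 0 <= G by apply: mulr_ge0 => //; lra.
exists (Num.Def.archi_bound G).+1; split => //.
have hG : G <= (Num.Def.archi_bound G).+1%:R.
  apply: le_trans (ltW (archi_boundP G0)) _; by rewrite ler_nat.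
set gamma := (Num.Def.archi_bound G).+1%:R.
have gam0 : 0 <= gamma by lra.
move=> V adj _ _ x v.
set c := closed_nbhd_norm adj x v.
set D := (maxn (deg adj v) 1)%:R.
have c0 : 0 <= c by apply: bigmax_ge0 => w _; apply: normInf_ge0.
have hD : 1 <= D by rewrite /D ler1n leq_maxr.
have hxN : forall w, (w == v) || adj v w -> normInf (x w) <= c.
  move=> w hw; rewrite /c /closed_nbhd_norm.
  apply: (@le_bigmaxB R V _ (fun w => (w == v) || adj v w) (fun w => normInf (x w))) => //.
have hxv : normInf (x v) <= c by apply: hxN; rewrite eqxx.
split; last first.
  set sn := signal_norm x.
  have sn0 : 0 <= sn by apply: bigmax_ge0 => w _; apply: normInf_ge0.
  have hcs : c <= sn.
    apply: bigmax_leB => // w _.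
    apply: (@le_bigmaxB R V _ xpredT (fun w => normInf (x w))) => //.

  have hDV : D <= #|V|%:R.
    rewrite /D ler_nat geq_max max_card /=.
    by apply/card_gt0P; exists v.
  apply: ler_pM => //; first by apply: mulr_ge0 => //; lra.
  by apply: ler_wpM2l => //; lra.
rewrite /gnn_apply.
set s := [seq _ | w <- _].
have hs : forall a, a \in s -> normInf a <= Bm * (c + 1).
  move=> a /mapP [w]; rewrite mem_enum => hw ->.
  apply: le_trans (HBm _) _; apply: ler_wpM2l => //; apply: lerD => //.
  by apply: normInf_row_mx => //; apply: hxN; apply/orP; right; exact: hw.
have hK : 0 <= Bm * (c + 1) by apply: mulr_ge0 => //; lra.
have hagg := aggregate_bound (gl_agg L) hK hs.
have hsz : size s = deg adj v by rewrite size_map /deg cardE.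
rewrite hsz in hagg.
rewrite -/D in hagg.
set u := D * (c + 1).
have u1 : 1 <= u by rewrite /u -[1]mulr1; apply: ler_pM => //; lra.
have hcu : c <= u.
  have : (c + 1) * 1 <= (c + 1) * D by apply: ler_wpM2l => //; lra.
  rewrite mulr1 [(c + 1) * D]mulrC /u; lra.
have hBu : 0 <= Bm * u by apply: mulr_ge0 => //; lra.
have e1 : normInf (x v) <= (1 + Bm) * u by rewrite mulrDl mul1r; lra.
have e2 : normInf (aggregate (gl_agg L) s) <= (1 + Bm) * u.
  apply: le_trans hagg _.
  have -> : D * (Bm * (c + 1)) = Bm * u by rewrite /u; ring.
  rewrite mulrDl mul1r; lra.
have hN := normInf_row_mx e1 e2.
apply: le_trans (HBc _) _.
have : Bc * (normInf (row_mx (x v) (aggregate (gl_agg L) s)) + 1) <= Bc * ((2 + Bm) * u).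
  apply: ler_wpM2l => //.
  have : (2 + Bm) * u = (1 + Bm) * u + u by rewrite mulrDl [2 * u + _]addrC; ring.
  move=> ->; lra.
move=> h; apply: le_trans h _.
rewrite mulrA -/G -mulrA -/u.
rewrite [(c + 1) * D]mulrC -/u; apply: ler_wpM2r => //; lra.
Qed.
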